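(* Let $G$ be an abelian group and $B=\bigoplus_{i\in G}B_i$ a $G$-graded integral domain finitely generated as a $k$-algebra, where $k$ is a field of characteristic zero with $k\subseteq B_0$. Let $f$ be a cylindrical element of $B$ and $d=\deg(f)\in G$. Then there exists a nonzero homogeneous locally nilpotent derivation $D:B^{(d)}\to B^{(d)}$ such that $\ker(D)\not\subseteq B_0$ and, for some $n\ge1$, $f^n\in D(B^{(d)})\cap\ker(D)$.
   Context: $B^{(d)}=\bigoplus_{i\in\langle d\rangle}B_i$. For nonzero homogeneous $f$, $B_{(f)}$ is the degree-$0$ subring of $B_f$. A ring is a polynomial ring in one variable if it is a polynomial ring in one variable over some subring (zero ring counts). For a $G$-graded ring $B$, $f$ is cylindrical if it is nonzero and homogeneous, $\deg(f)$ has infinite order in $G$, and $B_{(f)}$ is a polynomial ring in one variable. A derivation is homogeneous if it shifts degrees by a fixed group element; locally nilpotent if every element is killed by some power of it. *)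

(* Defs.v *)
From HB Require Import structures.
From mathcomp Require Import all_boot all_order all_algebra.
From mathcomp Require Import fraction.
Set Implicit Arguments. Unset Strict Implicit. Unset Printing Implicit Defensive.
Import Order.TTheory GRing.Theory Num.Theory.
Local Open Scope ring_scope.

Definition is_grading (G : zmodType) (B : comNzRingType) (Bi : G -> B -> Prop) :=
  [/\ (forall i, Bi i 0),
      (forall i x y, Bi i x -> Bi i y -> Bi i (x - y)),
      (forall i j x y, Bi i x -> Bi j y -> Bi (i + j) (x * y)),
      (forall b, exists (s : seq G) (c : G -> B),
          [/\ uniq s, (forall i, Bi i (c i)) & b = \sum_(i <- s) c i]) &
      (forall (s : seq G) (c : G -> B), uniq s -> (forall i, Bi i (c i)) ->
          \sum_(i <- s) c i = 0 -> forall i, i \in s -> c i = 0)].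

Inductive gen_alg (k : fieldType) (B : comNzRingType) (phi : k -> B) (S : seq B)
  : B -> Prop :=
  | gen_const c : gen_alg phi S (phi c)
  | gen_gen x : x \in S -> gen_alg phi S x
  | gen_add x y : gen_alg phi S x -> gen_alg phi S y -> gen_alg phi S (x + y)
  | gen_mul x y : gen_alg phi S x -> gen_alg phi S y -> gen_alg phi S (x * y).

Definition fin_gen_alg (k : fieldType) (B : comNzRingType) (phi : k -> B) :=
  exists S : seq B, forall b, gen_alg phi S b.

Definition is_poly_ring_one_var (F : comNzRingType) (R : F -> Prop) :=
  exists (A : F -> Prop) (t : F),
    [/\ A 1 /\ (forall x y, A x -> A y -> A (x - y)),
        (forall x y, A x -> A y -> A (x * y)),
        (forall x, A x -> R x) /\ R t,
        (forall x, R x -> exists p : {poly F}, (forall i, A p`_i) /\ x = p.[t]) &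
        (forall p : {poly F}, (forall i, A p`_i) -> p.[t] = 0 -> p = 0)].

(* the degree-0 subring B_(f) of the localization B_f, inside Frac(B):
   elements b / f^n with b homogeneous of degree n * deg f *)
Definition deg0_loc (G : zmodType) (B : idomainType) (Bi : G -> B -> Prop)
  (d : G) (f : B) : {fraction B} -> Prop :=
  fun x => exists (n : nat) (b : B), Bi (d *+ n) b /\
    x = (@FracField.tofrac B b) / (@FracField.tofrac B (f ^+ n)).

Definition homogeneous (G : zmodType) (B : comNzRingType) (Bi : G -> B -> Prop)
  (f : B) := exists i, Bi i f.

Definition cylindrical (G : zmodType) (B : idomainType) (Bi : G -> B -> Prop)
  (f : B) (d : G) :=
  [/\ f != 0, Bi d f,
      (forall n : nat, (0 < n)%N -> d *+ n != 0)
    & is_poly_ring_one_var (deg0_loc Bi d f)].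

Definition Veronese (G : zmodType) (B : comNzRingType) (Bi : G -> B -> Prop)
  (d : G) : B -> Prop :=
  fun b => exists (s : seq int) (c : int -> B),
    (forall m, Bi (d *~ m) (c m)) /\ b = \sum_(m <- s) c m.

(* D : B -> B considered on the subring C (only values on C matter) *)
Definition derivation_on (B : comNzRingType) (C : B -> Prop) (D : B -> B) :=
  [/\ (forall x, C x -> C (D x)),
      (forall x y, C x -> C y -> D (x + y) = D x + D y) &
      (forall x y, C x -> C y -> D (x * y) = x * D y + D x * y)].

Definition locally_nilpotent_on (B : comNzRingType) (C : B -> Prop) (D : B -> B) :=
  forall x, C x -> exists n : nat, iter n D x = 0.

Definition homogeneous_on (G : zmodType) (B : comNzRingType)
  (Bi : G -> B -> Prop) (C : B -> Prop) (D : B -> B) :=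
  exists e : G, forall i x, C x -> Bi i x -> Bi (i + e) (D x).

(* Main.v *)
From Stdlib Require Import ClassicalEpsilon.
Require Import Defs.
From HB Require Import structures.
From mathcomp Require Import all_boot all_order all_algebra.
From mathcomp Require Import fraction ring zify.
Set Implicit Arguments. Unset Strict Implicit. Unset Printing Implicit Defensive.
Import GRing.Theory.

Definition basis_of (C : seq nat) (M : (nat -> nat) -> Prop) (L : seq (nat -> nat)) :=
  (forall u, List.In u L -> M u) /\
  (forall b, M b -> exists u, List.In u L /\ forall i, i \in C -> (u i <= b i)%N).

Lemma union_basis (T : eqType) (C : seq nat) (P : seq T) (Mf : T -> (nat -> nat) -> Prop)
  (M' : (nat -> nat) -> Prop) :
  (forall p, p \in P -> exists L, basis_of C (Mf p) L) ->
  (forall p b, p \in P -> Mf p b -> M' b) ->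
  (forall b, M' b -> exists2 p, p \in P & Mf p b) ->
  exists L, basis_of C M' L.
Proof.
elim: P M' => [|p P IH] M' hb hsub hcov.
  by exists [::]; split => // b /hcov [p].
have [L1 [L1a L1b]] := hb p (mem_head _ _).
pose M2 b := M' b /\ exists2 q, q \in P & Mf q b.
have [L2 [L2a L2b]] : exists L, basis_of C M2 L.
  apply: IH.
  - by move=> q qP; apply: hb; rewrite inE qP orbT.
  - move=> q b qP Mb; split; last by exists q.
    by apply: (hsub q); rewrite ?inE ?qP ?orbT.
  - by move=> b [].
exists (L1 ++ L2); split.
  move=> u uin; have [h|h] := List.in_app_or _ _ _ uin.
    by apply: (hsub p); [exact: mem_head | exact: L1a].
  by case: (L2a u h).
move=> b Mb; have [q] := hcov b Mb; rewrite inE => /orP [/eqP -> Mpb|qP Mqb].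
  have [u [uL ub]] := L1b b Mpb; exists u; split => //.
  by apply: List.in_or_app; left.
have [u [uL ub]] : exists u, List.In u L2 /\ forall i, i \in C -> (u i <= b i)%N.
  by apply: L2b; split => //; exists q.
exists u; split => //; by apply: List.in_or_app; right.
Qed.

Lemma size_filter_lt (C : seq nat) i : i \in C -> (size (filter (predC1 i) C) < size C)%N.
Proof.
move=> iC; rewrite size_filter.
have := count_predC (pred1 i) C.
have : (0 < count (pred1 i) C)%N by rewrite -has_count has_pred1.
move=> h1 h2; rewrite -h2; rewrite -[X in (X < _)%N]add0n ltn_add2r //.
Qed.

Lemma dickson n : forall (C : seq nat) (M : (nat -> nat) -> Prop),
  (size C <= n)%N -> exists L, basis_of C M L.
Proof.
elim: n => [|n IH] C M hC.
  case: (Classical_Prop.classic (exists a, M a)) => [[a Ma]|nM].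
    exists [:: a]; split; first by move=> u [<-|].
    move=> b Mb; exists a; split; first by left.
    by move: hC; rewrite leqn0 => /nilP ->.
  by exists [::]; split => // b Mb; case: nM; exists b.
case: (Classical_Prop.classic (exists a, M a)) => [[a Ma]|nM]; last first.
  by exists [::]; split => // b Mb; case: nM; exists b.
pose Mi i b := M b /\ (b i < a i)%N.
have hMi : forall i, i \in C -> exists L, basis_of C (Mi i) L.
  move=> i iC.
  apply: (@union_basis _ C (iota 0 (a i)) (fun v b => M b /\ b i = v)).
  - move=> v _.
    have [L [La Lb]] := IH (filter (predC1 i) C) (fun b => M b /\ b i = v)
       (leq_trans (size_filter_lt iC) hC).
    exists L; split; first by [].
    move=> b [Mb bv]; have [u [uL ub]] := Lb b (conj Mb bv).
    exists u; split => // j jC.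
    case: (eqVneq j i) => [->|ji].
      by have [_ ->] := La u uL; rewrite bv.
    by apply: ub; rewrite mem_filter /= ji.
  - by move=> v b; rewrite mem_iota add0n => vlt [Mb bv]; split => //; rewrite bv.
  - by move=> b [Mb blt]; exists (b i) => //; rewrite mem_iota.
pose M2 b := M b /\ ~~ all (fun i => a i <= b i)%N C.
have [L2 [L2a L2b]] : exists L, basis_of C M2 L.
  apply: (@union_basis _ C C Mi) => //.
  - by move=> i b iC [Mb blt]; split => //; apply/allPn; exists i => //; rewrite -ltnNge.
  - move=> b [Mb /allPn [i iC]]; rewrite -ltnNge => blt; exists i => //.
exists (a :: L2); split.
  by move=> u [<-|/L2a []].
move=> b Mb; case ab: (all (fun i => a i <= b i)%N C).
  by exists a; split; [left | move=> i iC; move/allP: ab; apply].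
have [u [uL ub]] := L2b b (conj Mb (negbT ab)).
by exists u; split => //; right.
Qed.

Local Open Scope ring_scope.

Lemma sum_group (T : eqType) (G : eqType) (V : nmodType) (l : seq T) (key : T -> G) (F : T -> V) :
  \sum_(p <- l) F p = \sum_(g <- undup (map key l)) \sum_(p <- l | key p == g) F p.
Proof.
rewrite (exchange_big_dep predT) //=.
rewrite big_seq_cond [RHS]big_seq_cond.
apply: eq_bigr => p /andP[pl _].
rewrite -big_filter.
have -> : [seq i <- undup [seq key i | i <- l] | key p == i] = [:: key p].
  rewrite (@eq_filter _ _ (pred1 (key p))); last by move=> x /=; rewrite eq_sym.
  apply: filter_pred1_uniq; first exact: undup_uniq.
  by rewrite mem_undup; apply: map_f.
by rewrite big_seq1.
Qed.

Section Grading.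
Variables (G : zmodType) (B : idomainType) (Bi : G -> B -> Prop).
Hypothesis gr : is_grading Bi.
Hypothesis Bi1 : Bi 0 1.

Lemma Bi0 g : Bi g 0. Proof. by case: gr. Qed.
Lemma BiB g x y : Bi g x -> Bi g y -> Bi g (x - y). Proof. by case: gr => _ H _ _ _; apply: H. Qed.
Lemma BiN g x : Bi g x -> Bi g (- x).
Proof. by move=> h; rewrite -sub0r; apply: BiB => //; apply: Bi0. Qed.
Lemma BiD g x y : Bi g x -> Bi g y -> Bi g (x + y).
Proof. by move=> hx hy; rewrite -[y]opprK; apply: BiB => //; apply: BiN. Qed.
Lemma BiM g h x y : Bi g x -> Bi h y -> Bi (g + h) (x * y).
Proof. by case: gr => _ _ H _ _; apply: H. Qed.
Lemma BiX g x n : Bi g x -> Bi (g *+ n) (x ^+ n).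
Proof.
move=> hx; elim: n => [|n IH]; first by rewrite expr0 mulr0n.
by rewrite exprS mulrS; apply: BiM.
Qed.
Lemma Bi_sum (I : Type) g (r : seq I) (P : pred I) (F : I -> B) :
  (forall i, P i -> Bi g (F i)) -> Bi g (\sum_(i <- r | P i) F i).
Proof. by move=> h; apply: big_ind => //; [apply: Bi0 | apply: BiD]. Qed.

Lemma group_zero (l : seq (G * B)) :
  (forall p, p \in l -> Bi p.1 p.2) -> \sum_(p <- l) p.2 = 0 ->
  forall g, \sum_(p <- l | p.1 == g) p.2 = 0.
Proof.
move=> hl h0 g.
pose c g := \sum_(p <- l | p.1 == g) p.2.
have cB : forall g, Bi g (c g).
  move=> g'; rewrite /c big_seq_cond; apply: Bi_sum => p /andP[pl /eqP <-]; exact: hl.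
case: gr => _ _ _ _ dir.
have := dir (undup (map fst l)) c (undup_uniq _) cB.
rewrite -sum_group => /(_ h0) H.
case gin: (g \in undup (map fst l)); first by apply: H.
rewrite big1_seq // => p /andP[/eqP pg pl]; move: gin; rewrite mem_undup -pg.
by rewrite (map_f fst pl).
Qed.

Lemma Bi_uniq g h x : Bi g x -> Bi h x -> g != h -> x = 0.
Proof.
move=> hg hh ne.
have H1 : forall p, p \in [:: (g, x); (h, - x)] -> Bi p.1 p.2.
  by move=> p; rewrite !inE => /orP[/eqP ->|/eqP ->] //=; apply: BiN.
have H2 : \sum_(p <- [:: (g, x); (h, - x)]) p.2 = 0.
  by rewrite !big_cons big_nil /= addr0 subrr.
have := group_zero H1 H2 g.
by rewrite eq_sym in ne; rewrite !big_cons big_nil /= eqxx (negPf ne) !addr0.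
Qed.

End Grading.

Section PolyPart.
Variables (F : idomainType) (A : F -> Prop) (t : F).
Hypotheses (A1 : A 1) (AB : forall x y, A x -> A y -> A (x - y))
  (AM : forall x y, A x -> A y -> A (x * y)).
Hypothesis Ttr : forall p : {poly F}, (forall i, A p`_i) -> p.[t] = 0 -> p = 0.

Lemma A0 : A 0. Proof. by rewrite -(subrr 1); apply: AB. Qed.
Lemma AN x : A x -> A (- x). Proof. by move=> h; rewrite -sub0r; apply: AB => //; apply: A0. Qed.
Lemma AD x y : A x -> A y -> A (x + y).
Proof. by move=> hx hy; rewrite -[y]opprK; apply: AB => //; apply: AN. Qed.
Lemma AMn x n : A x -> A (x *+ n).
Proof. by move=> hx; elim: n => [|n IH]; [rewrite mulr0n; apply: A0 | rewrite mulrS; apply: AD]. Qed.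
Lemma Asum (I : Type) (r : seq I) (P : pred I) (h : I -> F) :
  (forall i, P i -> A (h i)) -> A (\sum_(i <- r | P i) h i).
Proof. by move=> H; apply: big_ind => //; [apply: A0 | apply: AD]. Qed.
Lemma AX x n : A x -> A (x ^+ n).
Proof. by move=> hx; elim: n => [|n IH]; [rewrite expr0 | rewrite exprS; apply: AM]. Qed.

Definition Ap (p : {poly F}) := forall i, A p`_i.
Lemma Ap0 : Ap 0. Proof. by move=> i; rewrite coef0; apply: A0. Qed.
Lemma ApC c : A c -> Ap c%:P. Proof. by move=> h i; rewrite coefC; case: ifP => // _; apply: A0. Qed.
Lemma ApX : Ap 'X. Proof. by move=> i; rewrite coefX; case: (i == 1)%N => //; apply: A0. Qed.
Lemma ApD p q : Ap p -> Ap q -> Ap (p + q). Proof. by move=> hp hq i; rewrite coefD; apply: AD. Qed.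
Lemma ApB p q : Ap p -> Ap q -> Ap (p - q). Proof. by move=> hp hq i; rewrite coefB; apply: AB. Qed.
Lemma ApM p q : Ap p -> Ap q -> Ap (p * q).
Proof. by move=> hp hq i; rewrite coefM; apply: Asum => j _; apply: AM. Qed.
Lemma Ap_deriv p : Ap p -> Ap p^`(). Proof. by move=> hp i; rewrite coef_deriv; apply: AMn. Qed.
Lemma Ap_derivn p n : Ap p -> Ap p^`(n).
Proof. by move=> hp; elim: n => [|n IH]; [rewrite derivn0 | rewrite derivnS; apply: Ap_deriv]. Qed.

Definition AP x := exists p, Ap p /\ x = p.[t].
Definition dt (x : F) : F :=
  (epsilon (inhabits 0) (fun p : {poly F} => Ap p /\ x = p.[t]))^`().[t].

Lemma Ap_inj p q : Ap p -> Ap q -> p.[t] = q.[t] -> p = q.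
Proof.
move=> hp hq e; apply/eqP; rewrite -subr_eq0; apply/eqP; apply: Ttr; first exact: ApB.
by rewrite hornerD hornerN e subrr.
Qed.

Lemma dt_horner p : Ap p -> dt p.[t] = p^`().[t].
Proof.
move=> hp; rewrite /dt.
have := epsilon_spec (inhabits 0) (fun q : {poly F} => Ap q /\ p.[t] = q.[t]) (ex_intro _ p (conj hp erefl)).
set q := epsilon _ _ => -[hq e].
by rewrite (Ap_inj hq hp (esym e)).
Qed.

Lemma AP_dt x : AP x -> AP (dt x).
Proof. by move=> [p [hp ->]]; rewrite dt_horner //; exists p^`(); split => //; apply: Ap_deriv. Qed.
Lemma AP0 : AP 0. Proof. by exists 0; split; [apply: Ap0 | rewrite horner0]. Qed.
Lemma APD x y : AP x -> AP y -> AP (x + y).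
Proof. by move=> [p [hp ->]] [q [hq ->]]; exists (p + q); split; [apply: ApD | rewrite hornerD]. Qed.
Lemma APN x : AP x -> AP (- x).
Proof. by move=> [p [hp ->]]; exists (- p); split; [rewrite -sub0r; apply: ApB => //; apply: Ap0 | rewrite hornerN]. Qed.
Lemma APM x y : AP x -> AP y -> AP (x * y).
Proof. by move=> [p [hp ->]] [q [hq ->]]; exists (p * q); split; [apply: ApM | rewrite hornerM]. Qed.

Lemma dt0 : dt 0 = 0.
Proof. by rewrite -(horner0 t) dt_horner ?deriv0 ?horner0 //; apply: Ap0. Qed.
Lemma dtC c : A c -> dt c = 0.
Proof. by move=> h; rewrite -[c](hornerC c t) dt_horner ?derivC ?horner0 //; apply: ApC. Qed.
Lemma dt1 : dt 1 = 0. Proof. exact: dtC. Qed.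
Lemma dtt : dt t = 1.
Proof. by rewrite -[t](hornerX t) dt_horner ?derivX ?hornerC //; apply: ApX. Qed.
Lemma dtD x y : AP x -> AP y -> dt (x + y) = dt x + dt y.
Proof.
move=> [p [hp ->]] [q [hq ->]]; rewrite -hornerD !dt_horner //; last exact: ApD.
by rewrite derivD hornerD.
Qed.
Lemma dtN x : AP x -> dt (- x) = - dt x.
Proof.
move=> [p [hp ->]]; rewrite -hornerN !dt_horner //; last by rewrite -sub0r; apply: ApB => //; apply: Ap0.
by rewrite derivN hornerN.
Qed.
Lemma dtM x y : AP x -> AP y -> dt (x * y) = x * dt y + dt x * y.
Proof.
move=> [p [hp ->]] [q [hq ->]]; rewrite -hornerM !dt_horner //; last exact: ApM.
by rewrite derivM hornerD !hornerM addrC.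
Qed.
Lemma dt_sum (I : Type) (r : seq I) (P : pred I) (h : I -> F) :
  (forall i, P i -> AP (h i)) -> dt (\sum_(i <- r | P i) h i) = \sum_(i <- r | P i) dt (h i).
Proof.
move=> H; elim: r => [|i r IH]; first by rewrite !big_nil dt0.
rewrite !big_cons; case: ifP => Pi //.
rewrite dtD ?IH //; first exact: H.
by apply: big_ind => //; [apply: AP0 | apply: APD].
Qed.
Lemma dt_iter x : AP x -> exists n, forall j, (n <= j)%N -> iter j dt x = 0.
Proof.
move=> [p [hp ->]]; exists (size p) => j hj.
have : forall j, iter j dt p.[t] = (p^`(j)).[t].
  elim=> [|j' IH] //=; rewrite IH dt_horner ?derivnS //; exact: Ap_derivn.
by move=> ->; rewrite derivn_poly0 ?horner0.
Qed.

(* units of A[t] lie in A, so dt kills them *)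
Lemma dt_unit x y : AP x -> AP y -> x * y = 1 -> dt x = 0.
Proof.
move=> [p [hp ->]] [q [hq ->]] e.
have pq1 : p * q = 1.
  apply: Ap_inj; [exact: ApM | exact: (ApC A1) | by rewrite hornerM e hornerC].
have pu : p \is a GRing.unit by apply/unitrP; exists q; split; [rewrite mulrC|]; exact: pq1.
move: pu; rewrite poly_unitE => /andP[/size_poly1P [c c0 pc] _].
by rewrite dt_horner // pc derivC horner0.
Qed.

End PolyPart.

Section Main.
Variables (G : zmodType) (k : fieldType) (B : idomainType)
  (phi : {rmorphism k -> B}) (Bi : G -> B -> Prop) (f : B) (d : G).
Hypothesis gr : is_grading Bi.
Hypothesis phiB : forall c, Bi 0 (phi c).
Hypotheses (fne0 : f != 0) (fd : Bi d f) (dinf : forall n : nat, (0 < n)%N -> d *+ n != 0).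
Local Notation F := {fraction B}.
Local Notation fr := (@FracField.tofrac B).
Local Notation u := (fr f).
Local Notation R := (deg0_loc Bi d f).
Variables (A : F -> Prop) (t : F).
Hypotheses (A1 : A 1) (AB : forall x y, A x -> A y -> A (x - y))
  (AM : forall x y, A x -> A y -> A (x * y)) (AR : forall x, A x -> R x) (Rt : R t)
  (Rpoly : forall x, R x -> exists p : {poly F}, (forall i, A p`_i) /\ x = p.[t])
  (Ttr : forall p : {poly F}, (forall i, A p`_i) -> p.[t] = 0 -> p = 0).

Lemma Bi1 : Bi 0 1. Proof. by rewrite -(rmorph1 phi). Qed.

Lemma fr_inj x y : fr x = fr y -> x = y.
Proof. by move=> e; apply/eqP; rewrite -tofrac_eq e. Qed.

Lemma u_neq0 : u != 0. Proof. by rewrite tofrac_eq0. Qed.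
Lemma u_unit : u \is a GRing.unit. Proof. by rewrite unitfE u_neq0. Qed.
Lemma frX_neq0 n : fr (f ^+ n) != 0.
Proof. by rewrite tofrac_eq0 expf_neq0. Qed.

Lemma dz_inj m m' : d *~ m = d *~ m' -> m = m'.
Proof.
move=> e; apply/eqP; rewrite -subr_eq0; apply/eqP.
have : d *~ (m - m') = 0 by rewrite mulrzBr e subrr.
case: (m - m') => [[|n]|n] h //.
  by move: (dinf (ltn0Sn n)); rewrite pmulrn h eqxx.
move: (dinf (ltn0Sn n)); move: h; rewrite NegzE mulrNz -pmulrn => /eqP.
by rewrite oppr_eq0 => ->.
Qed.

Lemma dX n : Bi (d *+ n) (f ^+ n). Proof. exact: (BiX gr Bi1). Qed.

Lemma R0 : R 0.
Proof. by exists 0%N, 0; split; [apply: (Bi0 gr) | rewrite tofrac0 mul0r]. Qed.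
Lemma R1 : R 1.
Proof. by exists 0%N, 1; split; [rewrite mulr0n; apply: Bi1 | rewrite expr0 tofrac1 divr1]. Qed.
Lemma RD x y : R x -> R y -> R (x + y).
Proof.
move=> [n [b [hb ->]]] [n' [b' [hb' ->]]].
exists (n + n')%N, (b * f ^+ n' + b' * f ^+ n); split.
  apply: (BiD gr) => //; rewrite mulrnDr; last rewrite addrC; apply: (BiM gr) => //; exact: dX.
by rewrite addf_div ?frX_neq0 // -!tofracM -tofracD -exprD.
Qed.
Lemma RM x y : R x -> R y -> R (x * y).
Proof.
move=> [n [b [hb ->]]] [n' [b' [hb' ->]]].
exists (n + n')%N, (b * b'); split; first by rewrite mulrnDr; apply: (BiM gr).
by rewrite mulf_div -!tofracM -exprD.
Qed.
Lemma RN x : R x -> R (- x).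
Proof.
move=> [n [b [hb ->]]]; exists n, (- b); split; first exact: BiN.
by rewrite tofracN mulNr.
Qed.
Lemma RX x n : R x -> R (x ^+ n).
Proof. by move=> h; elim: n => [|n IH]; [rewrite expr0; apply: R1 | rewrite exprS; apply: RM]. Qed.
Lemma AP_R x : AP A t x -> R x.
Proof.
move=> [p [hp ->]]; rewrite horner_coef; apply: big_ind => //; first exact: R0; first exact: RD.
by move=> i _; apply: RM; [apply: AR | apply: RX].
Qed.
Lemma R_AP x : R x -> AP A t x. Proof. exact: Rpoly. Qed.

Definition rho (m : int) (s : B) : F := fr s * u ^ (- m).

Lemma dNegz n : d *~ Negz n = - (d *+ n.+1).
Proof. by rewrite NegzE mulrNz -pmulrn. Qed.

Lemma R_rho m s : Bi (d *~ m) s -> R (rho m s).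
Proof.
rewrite /rho; case: m => n hs.
  by exists n, s; split => //; rewrite -invr_expz -exprnP tofracXn.
exists 0%N, (s * f ^+ n.+1); split.
  by rewrite mulr0n -(addNr (d *+ n.+1)); apply: (BiM gr); [rewrite -dNegz | apply: dX].
by rewrite expr0 tofrac1 divr1 tofracM tofracXn NegzE opprK.
Qed.

Local Notation D0 := (dt A t).
Ltac solA := try solve [exact: A1 | exact: AB | exact: AM | exact: Ttr].

Lemma rho_eq m s : fr s = rho m s * u ^ m.
Proof. by rewrite /rho -mulrA -exprzDr ?u_unit // addNr expr0z mulr1. Qed.
Lemma rhoD m s s' : rho m (s + s') = rho m s + rho m s'.
Proof. by rewrite /rho tofracD mulrDl. Qed.
Lemma rhoN m s : rho m (- s) = - rho m s.
Proof. by rewrite /rho tofracN mulNr. Qed.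
Lemma rho0 m : rho m 0 = 0.
Proof. by rewrite /rho tofrac0 mul0r. Qed.
Lemma rhoM m m' s s' : rho (m + m') (s * s') = rho m s * rho m' s'.
Proof. by rewrite /rho tofracM opprD exprzDr ?u_unit //; ring. Qed.
Lemma rho_AP m s : Bi (d *~ m) s -> AP A t (rho m s).
Proof. by move=> h; apply: R_AP; apply: R_rho. Qed.

Lemma psi_mul m m' n s s' : Bi (d *~ m) s -> Bi (d *~ m') s' ->
  u ^ (m + m' + n) * D0 (rho (m + m') (s * s')) =
  fr s * (u ^ (m' + n) * D0 (rho m' s')) + (u ^ (m + n) * D0 (rho m s)) * fr s'.
Proof.
move=> hs hs'; rewrite rhoM dtM; solA; try exact: rho_AP.
by rewrite (rho_eq m s) (rho_eq m' s') !exprzDr ?u_unit //; ring.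
Qed.

Definition Q (N : nat) s m := exists b, Bi (d *~ (m + N%:Z)) b /\
  fr b = u ^ (m + N%:Z) * D0 (rho m s).

Lemma Q_succ N s m : Q N s m -> Q N.+1 s m.
Proof.
move=> [b [hb e]]; exists (b * f).
have -> : m + (N.+1)%:Z = (m + N%:Z) + 1 by rewrite -addn1 PoszD addrA.
split; first by rewrite mulrzDr mulr1z; apply: (BiM gr).
have -> : u ^ (m + N%:Z + 1) = u ^ (m + N%:Z) * u by rewrite exprzDr ?u_unit.
by rewrite tofracM e; ring.
Qed.
Lemma Q_le N N' s m : (N <= N')%N -> Q N s m -> Q N' s m.
Proof.
move=> /subnK <-; elim: (N' - N)%N => [|n IH] //= h.
by rewrite addSn; apply: Q_succ; apply: IH.
Qed.
Lemma Q_add N s s' m : Bi (d *~ m) s -> Bi (d *~ m) s' -> Q N s m -> Q N s' m -> Q N (s + s') m.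
Proof.
move=> hs hs' [b [hb e]] [b' [hb' e']]; exists (b + b'); split; first by apply: (BiD gr).
by rewrite tofracD e e' rhoD dtD ?mulrDr //; solA; apply: rho_AP.
Qed.
Lemma Q_mul N s s' m m' : Bi (d *~ m) s -> Bi (d *~ m') s' -> Q N s m -> Q N s' m' ->
  Q N (s * s') (m + m').
Proof.
move=> hs hs' [b [hb e]] [b' [hb' e']]; exists (s * b' + b * s'); split.
  apply: (BiD gr).
    by rewrite -addrA mulrzDr; apply: (BiM gr).
  by rewrite addrAC mulrzDr; apply: (BiM gr).
by rewrite psi_mul // tofracD !tofracM e e'.
Qed.
Lemma Q_zero N m : Q N 0 m.
Proof. by exists 0; split; [apply: (Bi0 gr) | rewrite rho0 dt0 ?mulr0 ?tofrac0]; solA. Qed.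

Lemma R_phi c : R (fr (phi c)).
Proof. by exists 0%N, (phi c); split; [rewrite mulr0n | rewrite expr0 tofrac1 divr1]. Qed.

Lemma Q_phi N c : Q N (phi c) 0.
Proof.
exists 0; split; first exact: (Bi0 gr).
rewrite tofrac0.
have -> : rho 0 (phi c) = fr (phi c) by rewrite /rho oppr0 expr0z mulr1.
case: (eqVneq c 0) => [->|c0]; first by rewrite rmorph0 tofrac0 dt0 ?mulr0; solA.
rewrite (@dt_unit _ A t A1 AB AM Ttr _ (fr (phi c^-1))) ?mulr0 //; try exact: R_AP (R_phi _).
by rewrite -tofracM -rmorphM mulfV // rmorph1 tofrac1.
Qed.

Lemma Q_single s m : Bi (d *~ m) s -> exists N, Q N s m.
Proof.
move=> hs.
have := AP_R (AP_dt A1 AB Ttr (rho_AP hs)) => -[n' [b' [hb' e]]].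
have [j hj] : exists j : nat, m + `|m|%N%:Z = j%:Z.
  by case: m {hs e} => n; [exists (n + n)%N; rewrite PoszD | exists 0%N; rewrite NegzE addNr].
exists (n' + `|m|)%N, (b' * f ^+ j).
have hm : m + (n' + `|m|)%N%:Z = (n' + j)%N%:Z by rewrite PoszD addrCA hj -PoszD.
rewrite hm; split; first by rewrite -pmulrn mulrnDr; apply: (BiM gr) => //; apply: dX.
rewrite e tofracM !tofracXn -exprnP exprD.
have hu := frX_neq0 n'; rewrite tofracXn in hu.
by rewrite [u ^+ n' * _]mulrC -mulrA [u ^+ n' * _]mulrCA mulfV // mulr1 mulrC.
Qed.

Lemma mem_map_ex (T1 : Type) (T2 : eqType) (h : T1 -> T2) (l : seq T1) p :
  p \in map h l -> exists q, p = h q.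
Proof.
elim: l => //= q l IH; rewrite inE => /orP [/eqP ->|/IH //]; by exists q.
Qed.

Section Gordan.
Variable X : seq (G * B).
Hypothesis hX : forall p, p \in X -> Bi p.1 p.2.
Local Notation r := (size X).
Definition xi i := (nth (0, 0) X i).2.
Definition gi i := (nth (0, 0) X i).1.
Definition mono (a : nat -> nat) : B := \prod_(i < r) xi i ^+ a i.
Definition deg (a : nat -> nat) : G := \sum_(i < r) gi i *+ a i.
Definition Poly b := exists l : seq (k * (nat -> nat)), b = \sum_(q <- l) phi q.1 * mono q.2.

Lemma Bi_xi (i : 'I_r) : Bi (gi i) (xi i).
Proof. by apply: hX; apply: mem_nth. Qed.

Lemma Bi_mono a : Bi (deg a) (mono a).
Proof.
rewrite /deg /mono; apply: (big_ind2 (fun g b => Bi g b)).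
- exact: Bi1.
- by move=> ? ? ? ? h1 h2; apply: (BiM gr).
- by move=> i _; apply: (BiX gr Bi1); apply: Bi_xi.
Qed.

Lemma mono_add a a' : mono (fun i => a i + a' i)%N = mono a * mono a'.
Proof. by rewrite /mono -big_split /=; apply: eq_bigr => i _; rewrite exprD. Qed.
Lemma deg_add a a' : deg (fun i => a i + a' i)%N = deg a + deg a'.
Proof. by rewrite /deg -big_split /=; apply: eq_bigr => i _; rewrite mulrnDr. Qed.
Lemma mono_ext a a' : (forall i, (i < r)%N -> a i = a' i) -> mono a = mono a'.
Proof. by move=> h; apply: eq_bigr => i _; rewrite h. Qed.
Lemma deg_ext a a' : (forall i, (i < r)%N -> a i = a' i) -> deg a = deg a'.
Proof. by move=> h; apply: eq_bigr => i _; rewrite h. Qed.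
Lemma mono0 : mono (fun _ => 0%N) = 1.
Proof. by apply: big1 => i _; rewrite expr0. Qed.
Lemma deg0 : deg (fun _ => 0%N) = 0.
Proof. by apply: big1 => i _; rewrite mulr0n. Qed.

Lemma mono_delta i : (i < r)%N -> mono (fun j => if j == i then 1%N else 0%N) = xi i.
Proof.
move=> ir; rewrite /mono (bigD1 (Ordinal ir)) //= eqxx expr1 big1 ?mulr1 //.
move=> j /eqP ji; case: ifP => [/eqP e|_]; last by rewrite expr0.
by case: ji; apply: val_inj.
Qed.

Lemma Poly_add b b' : Poly b -> Poly b' -> Poly (b + b').
Proof. by move=> [l ->] [l' ->]; exists (l ++ l'); rewrite big_cat. Qed.
Lemma Poly_mul b b' : Poly b -> Poly b' -> Poly (b * b').
Proof.
move=> [l ->] [l' ->].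
exists [seq ((q.1 * q'.1)%R, fun i => (q.2 i + q'.2 i)%N) | q : k * (nat -> nat) <- l, q' : k * (nat -> nat) <- l'].
rewrite big_allpairs_dep mulr_suml; apply: eq_bigr => q _.
rewrite mulr_sumr; apply: eq_bigr => q' _ /=.
by rewrite mono_add rmorphM; ring.
Qed.
Lemma Poly_phi c : Poly (phi c).
Proof. by exists [:: (c, fun _ => 0%N)]; rewrite big_seq1 /= mono0 mulr1. Qed.
Lemma Poly0 : Poly 0.
Proof. by exists [::]; rewrite big_nil. Qed.
Lemma Poly_X p : p \in X -> Poly p.2.
Proof.
move=> pX; exists [:: (1, fun j => if j == index p X then 1%N else 0%N)].
rewrite big_seq1 /= rmorph1 mul1r mono_delta ?index_mem //.
by rewrite /xi nth_index.
Qed.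

Hypothesis S0sum : forall b, gen_alg phi [seq q.2 | q <- X] b.

Lemma Poly_all b : Poly b.
Proof.
elim: (S0sum b) => [c|x /mapP [p pX ->]|x y _ hx _ hy|x y _ hx _ hy].
- exact: Poly_phi.
- exact: Poly_X.
- exact: Poly_add.
- exact: Poly_mul.
Qed.

Definition M0 (a : nat -> nat) := (exists i, (i < r)%N /\ a i != 0%N) /\ exists m, deg a = d *~ m.

Lemma Q_list (L : seq (nat -> nat)) : (forall u, List.In u L -> M0 u) ->
  exists N, forall u, List.In u L -> forall m, deg u = d *~ m -> Q N (mono u) m.
Proof.
elim: L => [|u0 L IH] hL; first by exists 0%N.
have [N1 h1] := IH (fun u h => hL u (or_intror h)).
have [_ [m0 hm0]] := hL u0 (or_introl erefl).
have hb : Bi (d *~ m0) (mono u0) by rewrite -hm0; apply: Bi_mono.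
have [N0 h0] := Q_single hb.
exists (maxn N0 N1) => u [<-|uL] m hm.
  have <- : m0 = m by apply: dz_inj; rewrite -hm0 -hm.
  by apply: (Q_le (leq_maxl _ _)).
by apply: (Q_le (leq_maxr _ _)); apply: h1.
Qed.

Lemma Q_mono : exists N, forall a m, deg a = d *~ m -> Q N (mono a) m.
Proof.
have [L [La Lb]] := @dickson r (iota 0 r) M0 (eq_leq (size_iota _ _)).
have [N hN] := Q_list La.
exists N => a.
have [n] := ubnP (\sum_(i < r) a i); elim: n a => // n IH a hlt m hdeg.
case: (Classical_Prop.classic (exists i, (i < r)%N /\ a i != 0%N)) => [hnz|hz]; last first.
  have ha : forall i, (i < r)%N -> a i = 0%N.
    by move=> i ir; apply/eqP; apply: contraT => h; case: hz; exists i.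
  rewrite (mono_ext ha) mono0.
  have hm : m = 0 by apply: dz_inj; rewrite -hdeg (deg_ext ha) deg0 mulr0z.
  by rewrite hm -(rmorph1 phi); apply: Q_phi.
have [u [uL ub]] := Lb a (conj hnz (ex_intro _ m hdeg)).
have [[i0 [i0r ui0]] [mu hmu]] := La u uL.
pose a' := fun i => (a i - u i)%N.
have hsplit : forall i, (i < r)%N -> a i = (u i + a' i)%N.
  by move=> i ir; rewrite /a' subnKC //; apply: ub; rewrite mem_iota.
have hdeg' : deg a' = d *~ (m - mu).
  by rewrite mulrzBr -hdeg -hmu (deg_ext hsplit) deg_add addrC addKr.
have hlt' : (\sum_(i < r) a' i < n)%N.
  have e : (\sum_(i < r) a i = \sum_(i < r) u i + \sum_(i < r) a' i)%N.
    by rewrite -big_split; apply: eq_bigr => i _; apply: hsplit.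
  have pos : (0 < \sum_(i < r) u i)%N.
    by rewrite (bigD1 (Ordinal i0r)) //= addn_gt0 lt0n ui0.
  by move: hlt pos; rewrite e; lia.
have q1 := IH a' hlt' (m - mu) hdeg'.
have q2 := hN u uL mu hmu.
have hbu : Bi (d *~ mu) (mono u) by rewrite -hmu; apply: Bi_mono.
have hba : Bi (d *~ (m - mu)) (mono a') by rewrite -hdeg'; apply: Bi_mono.
have := Q_mul hbu hba q2 q1.
by rewrite (mono_ext hsplit) mono_add addrC subrK.
Qed.

Lemma Q_all : exists N, forall s m, Bi (d *~ m) s -> Q N s m.
Proof.
have [N hN] := Q_mono.
exists N => s m hs.
have [l hl] := Poly_all s.
pose l2 := (d *~ m, - s) :: [seq (deg q.2, phi q.1 * mono q.2) | q <- l].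
have H1 : forall p, p \in l2 -> Bi p.1 p.2.
  move=> p; rewrite inE => /orP [/eqP -> /=|/mem_map_ex [q ->] /=]; first exact: (BiN gr).
  by rewrite -[deg _]add0r; apply: (BiM gr); [apply: phiB | apply: Bi_mono].
have H2 : \sum_(p <- l2) p.2 = 0 by rewrite big_cons big_map /= -hl addNr.
have := group_zero gr H1 H2 (d *~ m).
rewrite big_cons /= eqxx big_map /= => /eqP; rewrite addrC subr_eq0 => /eqP <-.
set S := \sum_(j <- l | _) _.
suff : Bi (d *~ m) S /\ Q N S m by case.
apply: (big_ind (fun x => Bi (d *~ m) x /\ Q N x m)).
- by split; [apply: (Bi0 gr) | apply: Q_zero].
- by move=> x y [hx qx] [hy qy]; split; [apply: (BiD gr) | apply: Q_add].
move=> q /eqP hq.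
have hb : Bi (d *~ m) (mono q.2) by rewrite -hq; apply: Bi_mono.
split; first by rewrite -[d *~ m]add0r; apply: (BiM gr).
have hp : Bi (d *~ 0) (phi q.1) by rewrite mulr0z.
have := Q_mul hp hb (Q_phi N q.1) (hN _ _ hq).
by rewrite add0r.
Qed.
End Gordan.

Section Deriv.
Variable N : nat.
Hypothesis QN : forall s m, Bi (d *~ m) s -> Q N s m.

Definition E m s := epsilon (inhabits 0) (fun b => fr b = u ^ (m + N%:Z) * D0 (rho m s)).

Lemma E_spec m s : Bi (d *~ m) s ->
  fr (E m s) = u ^ (m + N%:Z) * D0 (rho m s) /\ Bi (d *~ (m + N%:Z)) (E m s).
Proof.
move=> hs; have [b [hb e]] := QN hs.
have := epsilon_spec (inhabits 0) (fun b => fr b = u ^ (m + N%:Z) * D0 (rho m s)) (ex_intro _ b e).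
rewrite -/(E m s) => e'; split => //.
by have -> : E m s = b by apply: fr_inj; rewrite e e'.
Qed.

Definition homl (l : seq (int * B)) := forall p, p \in l -> Bi (d *~ p.1) p.2.
Definition rep x := epsilon (inhabits [::]) (fun l => homl l /\ x = \sum_(p <- l) p.2).
Definition Dd x := \sum_(p <- rep x) E p.1 p.2.

Definition Psi (l : seq (int * B)) := \sum_(p <- l) u ^ (p.1 + N%:Z) * D0 (rho p.1 p.2).

Lemma fr_sumE l : homl l -> fr (\sum_(p <- l) E p.1 p.2) = Psi l.
Proof.
move=> hl; rewrite rmorph_sum big_seq [RHS]big_seq; apply: eq_bigr => p pl.
by have [e _] := E_spec (hl p pl); exact: e.
Qed.

Lemma rho_sum (I : Type) m (r : seq I) (P : pred I) (h : I -> B) :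
  rho m (\sum_(i <- r | P i) h i) = \sum_(i <- r | P i) rho m (h i).
Proof. by apply: (big_morph (rho m)); [apply: rhoD | apply: rho0]. Qed.

Lemma Psi_zero l : homl l -> \sum_(p <- l) p.2 = 0 -> Psi l = 0.
Proof.
move=> hl h0; rewrite /Psi (sum_group l fst).
apply: big1 => g _.
transitivity (\sum_(p <- l | (p \in l) && (p.1 == g)) u ^ (g + N%:Z) * D0 (rho g p.2)).
  by rewrite big_seq_cond; apply: eq_bigr => p /andP [_ /eqP ->].
rewrite -mulr_sumr -dt_sum; solA; last first.
  by move=> p /andP [pl /eqP <-]; apply: rho_AP; apply: hl.
rewrite -rho_sum -big_seq_cond.
have H1 : forall q, q \in [seq (d *~ p.1, p.2) | p <- l] -> Bi q.1 q.2.
  by move=> q /mapP [p pl ->]; apply: hl.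
have H2 : \sum_(q <- [seq (d *~ p.1, p.2) | p <- l]) q.2 = 0 by rewrite big_map.
have := group_zero gr H1 H2 (d *~ g); rewrite big_map /=.
have -> : \sum_(p <- l | d *~ p.1 == d *~ g) p.2 = \sum_(p <- l | p.1 == g) p.2.
  apply: eq_bigl => p; apply/eqP/eqP; [exact: dz_inj | by move=> ->].
by move=> ->; rewrite rho0 dt0 ?mulr0; solA.
Qed.

Lemma Psi_cat l l' : Psi (l ++ l') = Psi l + Psi l'.
Proof. by rewrite /Psi big_cat. Qed.
Lemma Psi_neg l : homl l -> Psi [seq (p.1, - p.2) | p <- l] = - Psi l.
Proof.
move=> hl; rewrite /Psi big_map -sumrN big_seq [RHS]big_seq; apply: eq_bigr => p pl /=.
by rewrite rhoN dtN ?mulrN //; solA; apply: rho_AP; apply: hl.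
Qed.

Lemma WD l l' : homl l -> homl l' -> \sum_(p <- l) p.2 = \sum_(p <- l') p.2 ->
  \sum_(p <- l) E p.1 p.2 = \sum_(p <- l') E p.1 p.2.
Proof.
move=> hl hl' e; apply: fr_inj; rewrite !fr_sumE //.
have hn : homl (l ++ [seq (p.1, - p.2) | p <- l']).
  move=> p; rewrite mem_cat => /orP [/hl //|/mapP [q ql ->] /=].
  by apply: (BiN gr); apply: hl'.
have := Psi_zero hn; rewrite Psi_cat Psi_neg // big_cat big_map /= sumrN e subrr.
by move=> /(_ erefl) /eqP; rewrite subr_eq0 => /eqP.
Qed.

Lemma D_sum l : homl l -> Dd (\sum_(p <- l) p.2) = \sum_(p <- l) E p.1 p.2.
Proof.
move=> hl; rewrite /Dd /rep.
set x := \sum_(p <- l) p.2.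
have := epsilon_spec (inhabits [::]) (fun l => homl l /\ x = \sum_(p <- l) p.2) (ex_intro _ l (conj hl erefl)).
set l0 := epsilon _ _ => -[h0 e0].
by apply: WD => //; rewrite -e0.
Qed.

Lemma D_hom m s : Bi (d *~ m) s -> Dd s = E m s.
Proof.
move=> hs; have := @D_sum [:: (m, s)]; rewrite !big_seq1 /=; apply.
by move=> p; rewrite inE => /eqP ->.
Qed.

Lemma Ver_hom x : Veronese Bi d x -> exists l, homl l /\ x = \sum_(p <- l) p.2.
Proof.
move=> [s [c [hc ->]]]; exists [seq (m, c m) | m <- s]; split; last by rewrite big_map.
by move=> p /mapP [m _ ->].
Qed.

Lemma hom_Ver l : homl l -> Veronese Bi d (\sum_(p <- l) p.2).
Proof.
move=> hl; exists (undup (map fst l)), (fun m => \sum_(p <- l | p.1 == m) p.2); split.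
  move=> m; rewrite big_seq_cond; apply: (Bi_sum gr) => p /andP [pl /eqP <-]; exact: hl.
exact: sum_group.
Qed.

Lemma D_closed x : Veronese Bi d x -> Veronese Bi d (Dd x).
Proof.
move=> /Ver_hom [l [hl ->]]; rewrite D_sum //.
have -> : \sum_(p <- l) E p.1 p.2 = \sum_(q <- [seq (p.1 + N%:Z, E p.1 p.2) | p <- l]) q.2.
  by rewrite big_map.
apply: hom_Ver => q /mapP [p pl ->] /=.
by have [_ h] := E_spec (hl p pl).
Qed.

Lemma D_add x y : Veronese Bi d x -> Veronese Bi d y -> Dd (x + y) = Dd x + Dd y.
Proof.
move=> /Ver_hom [l [hl ->]] /Ver_hom [l' [hl' ->]].
rewrite -big_cat !D_sum ?big_cat //.
by move=> p; rewrite mem_cat => /orP [/hl|/hl'].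
Qed.

Lemma E_mul m m' s s' : Bi (d *~ m) s -> Bi (d *~ m') s' ->
  E (m + m') (s * s') = s * E m' s' + E m s * s'.
Proof.
move=> hs hs'; have hss : Bi (d *~ (m + m')) (s * s') by rewrite mulrzDr; apply: (BiM gr).
apply: fr_inj; rewrite tofracD !tofracM.
have [e1 _] := E_spec hss; have [e2 _] := E_spec hs; have [e3 _] := E_spec hs'.
by rewrite e1 e2 e3 -psi_mul.
Qed.

Lemma D_mul x y : Veronese Bi d x -> Veronese Bi d y -> Dd (x * y) = x * Dd y + Dd x * y.
Proof.
move=> /Ver_hom [l [hl ->]] /Ver_hom [l' [hl' ->]].
pose L := [seq (p.1 + q.1, p.2 * q.2) | p <- l, q <- l'].
have hL : homl L.
  move=> z /allpairsP [[p q] [pl ql ->]] /=.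
  by rewrite mulrzDr; apply: (BiM gr); [apply: hl | apply: hl'].
have eL : (\sum_(p <- l) p.2) * (\sum_(q <- l') q.2) = \sum_(z <- L) z.2.
  rewrite big_allpairs_dep mulr_suml; apply: eq_bigr => p _.
  by rewrite mulr_sumr.
rewrite eL !D_sum // big_allpairs_dep /=.
rewrite [(\sum_(p <- l) p.2) * _]mulr_suml [(\sum_(p <- l) E _ _) * _]mulr_suml -big_split /=.
rewrite big_seq [RHS]big_seq; apply: eq_bigr => p pl.
rewrite [p.2 * _]mulr_sumr [E _ _ * _]mulr_sumr -big_split /=.
rewrite big_seq [RHS]big_seq; apply: eq_bigr => q ql.
by rewrite E_mul; [|apply: hl|apply: hl'].
Qed.

Lemma D_zero : Dd 0 = 0.
Proof. by have := @D_sum [::]; rewrite !big_nil; apply. Qed.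

Lemma D_homog i x : Veronese Bi d x -> Bi i x -> Bi (i + d *~ N%:Z) (Dd x).
Proof.
move=> /Ver_hom [l [hl ex]] hi.
case: (boolP (has (fun p => d *~ p.1 == i) l)) => [/hasP [p pl /eqP ep]|hn].
  have hx : Bi (d *~ p.1) x by rewrite ep.
  rewrite (D_hom hx); have [_ h] := E_spec hx.
  by rewrite -ep -mulrzDr.
have H1 : forall q, q \in (i, - x) :: [seq (d *~ p.1, p.2) | p <- l] -> Bi q.1 q.2.
  move=> q; rewrite inE => /orP [/eqP -> /=|/mapP [p pl ->] //]; first exact: (BiN gr).
  exact: hl.
have H2 : \sum_(q <- (i, - x) :: [seq (d *~ p.1, p.2) | p <- l]) q.2 = 0.
  by rewrite big_cons big_map /= -ex addNr.
have := group_zero gr H1 H2 i; rewrite big_cons /= eqxx big_map /= big1_seq; last first.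
  by move=> p /andP [e pl]; move/hasPn: hn => /(_ p pl); rewrite e.
rewrite addr0 => /eqP; rewrite oppr_eq0 => /eqP ->.
by rewrite D_zero; apply: (Bi0 gr).
Qed.

Lemma u_cancel a : u ^ a * u ^ (- a) = 1.
Proof. by rewrite -exprzDr ?u_unit // subrr expr0z. Qed.

Lemma iter_rho m s j : Bi (d *~ m) s ->
  Bi (d *~ (m + (j * N)%N%:Z)) (iter j Dd s) /\
  rho (m + (j * N)%N%:Z) (iter j Dd s) = iter j D0 (rho m s).
Proof.
move=> hs; elim: j => [|j [IHb IHr]]; first by rewrite mul0n addr0.
have em : m + (j.+1 * N)%N%:Z = (m + (j * N)%N%:Z) + N%:Z by rewrite mulSn PoszD addrCA addrC.
rewrite em /= (D_hom IHb); have [e h] := E_spec IHb; split => //.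
by rewrite /rho e -IHr /rho mulrAC u_cancel mul1r.
Qed.

Lemma hom_nil m s : Bi (d *~ m) s -> exists n, forall j, (n <= j)%N -> iter j Dd s = 0.
Proof.
move=> hs; have [n hn] := dt_iter A1 AB Ttr (rho_AP hs).
exists n => j hj; have [_ e] := iter_rho j hs.
rewrite hn // in e.
apply/eqP; rewrite -tofrac_eq0 (rho_eq (m + (j * N)%N%:Z)) e mul0r //.
Qed.

Lemma iter_sum j : forall l, homl l -> iter j Dd (\sum_(p <- l) p.2) = \sum_(p <- l) iter j Dd p.2.
Proof.
elim: j => [|j IH] l hl; first by [].
rewrite iterSr D_sum //.
have hl1 : homl [seq (p.1 + N%:Z, E p.1 p.2) | p <- l].
  by move=> q /mapP [p pl ->] /=; have [_ h] := E_spec (hl p pl).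
have := IH _ hl1; rewrite !big_map /= => ->.
rewrite big_seq [RHS]big_seq; apply: eq_bigr => p pl.
by rewrite -(D_hom (hl p pl)) -iterSr.
Qed.

Lemma D_nil x : Veronese Bi d x -> exists n, iter n Dd x = 0.
Proof.
move=> /Ver_hom [l [hl ->]].
have : exists n, forall p, p \in l -> forall j, (n <= j)%N -> iter j Dd p.2 = 0.
  elim: l hl => [|p l IH] hl; first by exists 0%N.
  have hl' : homl l by move=> q ql; apply: hl; rewrite inE ql orbT.
  have [n1 h1] := IH hl'.
  have [n0 h0] := hom_nil (hl p (mem_head _ _)).
  exists (maxn n0 n1) => q; rewrite inE => /orP [/eqP -> j hj|ql j hj].
    by apply: h0; apply: leq_trans hj; apply: leq_maxl.
  by apply: h1 => //; apply: leq_trans hj; apply: leq_maxr.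
move=> [n hn]; exists n; rewrite iter_sum //.
by rewrite big_seq big1 // => p pl; apply: hn.
Qed.

Lemma rho_fX n : rho n%:Z (f ^+ n) = 1.
Proof. by rewrite /rho tofracXn; apply: (u_cancel n%:Z). Qed.

Lemma Deriv_result : (1 <= N)%N ->
  [/\ derivation_on (Veronese Bi d) Dd /\
          (exists x, Veronese Bi d x /\ Dd x != 0),
        homogeneous_on Bi (Veronese Bi d) Dd,
        locally_nilpotent_on (Veronese Bi d) Dd,
        (exists x, [/\ Veronese Bi d x, Dd x = 0 & ~ Bi 0 x]) &
        (exists n : nat, (1 <= n)%N /\
           (exists a, Veronese Bi d a /\ Dd a = f ^+ n) /\ Dd (f ^+ n) = 0)].
Proof.
move=> N1.
have [n0 [b0 [hb0 et]]] := Rt.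
have hb0' : Bi (d *~ n0%:Z) b0 by rewrite -pmulrn.
have Db0 : Dd b0 = f ^+ (n0 + N).
  rewrite (D_hom hb0'); apply: fr_inj; have [e _] := E_spec hb0'; rewrite e.
  have -> : rho n0%:Z b0 = t by rewrite et /rho -invr_expz -exprnP tofracXn.
  by rewrite dtt ?mulr1 ?tofracXn -?PoszD; solA.
have hfn : forall n, Bi (d *~ n%:Z) (f ^+ n) by move=> n; rewrite -pmulrn; apply: dX.
have Dfn : forall n, Dd (f ^+ n) = 0.
  move=> n; rewrite (D_hom (hfn n)); apply: fr_inj; have [e _] := E_spec (hfn n).
  by rewrite e rho_fX dt1 ?mulr0 ?tofrac0; solA.
have Verb : forall m s, Bi (d *~ m) s -> Veronese Bi d s.
  move=> m s hs; have := @hom_Ver [:: (m, s)]; rewrite big_seq1; apply.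
  by move=> p; rewrite inE => /eqP ->.
split.
- split; first by split; [exact: D_closed | exact: D_add | exact: D_mul].
  exists b0; split; first exact: Verb hb0'.
  by rewrite Db0 expf_neq0.
- by exists (d *~ N%:Z) => i x hx hi; apply: D_homog.
- exact: D_nil.
- exists f; split; first exact: (Verb 1 f).
  + by have := Dfn 1%N; rewrite expr1.
  + move=> h0; have d0 : d != 0 by have := dinf (ltn0Sn 0); rewrite mulr1n.
    by move: fne0; rewrite (Bi_uniq gr fd h0 d0) eqxx.
- exists (n0 + N)%N; split; first by rewrite addn_gt0 N1 orbT.
  split; last exact: Dfn.
  by exists b0; split; [exact: Verb hb0' | exact: Db0].
Qed.
End Deriv.

Lemma gen_sub (S S' : seq B) b : (forall x, x \in S -> gen_alg phi S' x) ->
  gen_alg phi S b -> gen_alg phi S' b.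
Proof.
move=> hS; elim=> [c|x xS|x y _ hx _ hy|x y _ hx _ hy].
- exact: gen_const.
- exact: hS.
- exact: gen_add.
- exact: gen_mul.
Qed.

Lemma gen_sum (S : seq B) (l : seq (G * B)) : (forall p, p \in l -> p.2 \in S) ->
  gen_alg phi S (\sum_(p <- l) p.2).
Proof.
move=> hl; rewrite big_seq; apply: big_ind.
- by rewrite -(rmorph0 phi); apply: gen_const.
- by move=> x y; apply: gen_add.
- by move=> p pl; apply: gen_gen; apply: hl.
Qed.

Lemma hom_gens (S0 : seq B) : exists X : seq (G * B),
  (forall p, p \in X -> Bi p.1 p.2) /\ forall x, x \in S0 -> gen_alg phi [seq q.2 | q <- X] x.
Proof.
elim: S0 => [|x S [X [hX hS]]]; first by exists [::].
case: gr => _ _ _ hdec _.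
have [s [c [_ hc ex]]] := hdec x.
exists ([seq (g, c g) | g <- s] ++ X); split.
  by move=> p; rewrite mem_cat => /orP [/mapP [g _ ->]|/hX].
move=> y; rewrite inE => /orP [/eqP ->|yS].
  have -> : x = \sum_(p <- [seq (g, c g) | g <- s]) p.2 by rewrite big_map.
  by apply: gen_sum => p pm; rewrite map_cat mem_cat map_f.
apply: (gen_sub _ (hS y yS)) => z zX; apply: gen_gen.
by rewrite map_cat mem_cat zX orbT.
Qed.

Lemma main_result : fin_gen_alg phi ->
  exists D : B -> B,
    [/\ derivation_on (Veronese Bi d) D /\
          (exists x, Veronese Bi d x /\ D x != 0),
        homogeneous_on Bi (Veronese Bi d) D,
        locally_nilpotent_on (Veronese Bi d) D,
        (exists x, [/\ Veronese Bi d x, D x = 0 & ~ Bi 0 x]) &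
        (exists n : nat, (1 <= n)%N /\
           (exists a, Veronese Bi d a /\ D a = f ^+ n) /\ D (f ^+ n) = 0)].
Proof.
move=> [S0 hS0].
have [X [hX hXS]] := hom_gens S0.
have gX : forall b, gen_alg phi [seq q.2 | q <- X] b.
  by move=> b; apply: (gen_sub hXS).
have [N0 hN0] := Q_all hX gX.
have QN : forall s m, Bi (d *~ m) s -> Q N0.+1 s m.
  by move=> s m hs; apply: (Q_le (leqnSn _)); apply: hN0.
by exists (Dd N0.+1); apply: Deriv_result.
Qed.
End Main.

Theorem proposition4p6 (G : zmodType) (k : fieldType) (B : idomainType)
  (phi : {rmorphism k -> B}) (Bi : G -> B -> Prop) (f : B) (d : G) :
  [pchar k] =i pred0 ->
  is_grading Bi ->
  (forall c : k, Bi 0 (phi c)) ->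
  fin_gen_alg phi ->
  cylindrical Bi f d ->
  exists D : B -> B,
    [/\ derivation_on (Veronese Bi d) D /\
          (exists x, Veronese Bi d x /\ D x != 0),
        homogeneous_on Bi (Veronese Bi d) D,
        locally_nilpotent_on (Veronese Bi d) D,
        (exists x, [/\ Veronese Bi d x, D x = 0 & ~ Bi 0 x]) &
        (exists n : nat, (1 <= n)%N /\
           (exists a, Veronese Bi d a /\ D a = f ^+ n) /\ D (f ^+ n) = 0)].
Proof.
move=> _ gr phiB hfg [fne0 fd dinf [A [t [[A1 AB] AM [AR Rt] Rpoly Ttr]]]].
exact: (main_result gr phiB fne0 fd dinf A1 AB AM AR Rt Rpoly Ttr hfg).
Qed.
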